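(* Let $p\ge7$ be a prime with $p\equiv3\pmod4$ and $r=(p-1)/2$ (odd, $r\ge3$). Let $s$ be the sequence over $\mathbb{F}_p$ of period $2r$ defined by $s_{2i}=2i+1$, $s_{2i+1}=-(2i+1)$ for $0\le i\le (r-3)/2$; $s_{r-1}=r$; $s_{r+2i}=2i+2$, $s_{r+2i+1}=-(2i+2)$ for $0\le i\le (r-3)/2$; $s_{2r-1}=r+1$ (that is, $1,-1,3,-3,\ldots,r-2,-(r-2),r,2,-2,4,-4,\ldots,r-1,-(r-1),r+1$). Then $\{s_0,\ldots,s_{2r-1}\}=\mathbb{F}_p^*$, $\phi_{p,2r}(x)$ divides $\tilde{s}(x)=s_0x^{2r-1}+\cdots+s_{2r-1}$ (so $\mathbb{F}_p^*$ is automatically non-standard), and the minimal polynomial of $s$ is \[f_s(x)=\begin{cases}(x+1)(x^r-1)/(x-1), & p\equiv 7\pmod{12},\\ (x+1)(x^r-1)/\big((x-1)(x-1/3)\big), & p\equiv 11\pmod{12}.\end{cases}\]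
   Context: $\phi_{p,m}$ is the $m$th cyclotomic polynomial reduced mod $p$; its zeros are the primitive $m$th roots of unity. The minimal polynomial $f_s$ of a sequence $s$ is the monic generator of the ideal of polynomials $g\in\mathbb{F}_p[x]$ with $g(\sigma)s=0$, $(\sigma s)_n=s_{n+1}$. A subgroup $M$ of size $m$ enumerated as $s_0,\ldots,s_{m-1}$ is called automatically non-standard if $\phi_{p,m}(x)$ divides $s_0x^{m-1}+\cdots+s_{m-1}$. Here $1/3$ denotes the inverse of $3$ in $\mathbb{F}_p$. *)

(* Defs.v *)
From HB Require Import structures.
From mathcomp Require Import all_boot all_order all_algebra all_field.
Set Implicit Arguments. Unset Strict Implicit. Unset Printing Implicit Defensive.
Import Order.TTheory GRing.Theory.
Local Open Scope ring_scope.

Definition phi_mod (p m : nat) : {poly 'F_p} :=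
  map_poly (fun z : int => z%:~R) 'Phi_m.

(* g annihilates s : g(sigma) s = 0, i.e. sum_i g_i s_{n+i} = 0 for all n *)
Definition annihilates (F : fieldType) (g : {poly F}) (s : nat -> F) : Prop :=
  forall n : nat, \sum_(i < size g) g`_i * s (n + i)%N = 0.

Definition is_min_poly (F : fieldType) (f : {poly F}) (s : nat -> F) : Prop :=
  f \is monic /\ annihilates f s /\ (forall g, annihilates g s -> f %| g).

Definition rev_gen (F : fieldType) (m : nat) (s : nat -> F) : {poly F} :=
  \poly_(i < m) s (m.-1 - i)%N.

Definition seq_s (p : nat) (n : nat) : 'F_p :=
  let r := (p.-1 %/ 2)%N in
  let k := (n %% (2 * r))%N in
  if (k < r.-1)%N then
    (if ~~ odd k then (k.+1)%:R else - (k%:R))        (* s_{2i}=2i+1, s_{2i+1}=-(2i+1) *)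
  else if k == r.-1 then r%:R
  else if (k < (2 * r).-1)%N then
    (let j := (k - r)%N in
     if ~~ odd j then (j.+2)%:R else - ((j.+1)%:R))   (* s_{r+2i}=2i+2, s_{r+2i+1}=-(2i+2) *)
  else (r.+1)%:R.

(* Main.v *)
Require Import Defs.
From HB Require Import structures.
From mathcomp Require Import all_boot all_order all_algebra all_field.
From mathcomp Require Import ring zify.
From mathcomp Require Import cyclic.
Import Order.TTheory GRing.Theory.
Local Open Scope ring_scope.


Lemma geomY (R : comRingType) (y : R) n : (1 - y) * \sum_(k < n) y ^+ k = 1 - y ^+ n.
Proof.
elim: n => [|n IH]; first by rewrite big_ord0 mulr0 expr0 subrr.
by rewrite big_ord_recr /= mulrDr IH exprS; ring.
Qed.

Lemma geomW (R : comRingType) (y : R) n :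
  (1 + y) ^+ 2 * \sum_(k < n) (k.+1)%:R * (- y) ^+ k
  = 1 - (n.+1)%:R * (- y) ^+ n + n%:R * (- y) ^+ n.+1.
Proof.
elim: n => [|n IH]; first by rewrite big_ord0 mulr0 expr0 !expr1; ring.
rewrite big_ord_recr /= mulrDr IH !exprS. ring.
Qed.

Lemma map_Phi (R : fieldType) n (z : R) :
  n.-primitive_root z -> map_poly intr 'Phi_n = cyclotomic z n.
Proof.
elim/ltn_ind: n z => n IHn z prim_z.
have n_gt0 := prim_order_gt0 prim_z.
have [uDn _ inDn] := divisors_correct n_gt0.
have h1 := prod_Cyclotomic n_gt0.
have h2 := prod_cyclotomic prim_z.
have mapXn1 : map_poly (intr : int -> R) ('X^n - 1) = 'X^n - 1.
  by rewrite rmorphB /= rmorph1 map_polyXn.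
move: h2; rewrite -mapXn1 -h1 rmorph_prod /= (big_rem n) ?inDn //=.
rewrite [X in _ = X](big_rem n) ?inDn //= divnn n_gt0 expr1.
have -> : \prod_(d <- rem n (divisors n)) cyclotomic (z ^+ (n %/ d)) d
        = \prod_(d <- rem n (divisors n)) map_poly intr 'Phi_d.
  apply: eq_big_seq => d; rewrite mem_rem_uniq ?inE //= inDn => /andP[n'd ddvn].
  by rewrite -IHn ?dvdn_prim_root // ltn_neqAle n'd dvdn_leq.
move/mulIf; apply.
apply: monic_neq0; apply: monic_prod => d _; apply: monic_map; exact: Cyclotomic_monic.
Qed.

Section S.
Variables (p m : nat).
Hypothesis pP : prime p.
Hypothesis pm : p = (4 * m + 3)%N.
Hypothesis m1 : (1 <= m)%N.

Local Notation F := 'F_p.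
Local Notation r := (2 * m + 1)%N.
Local Notation N := (2 * r)%N.

Lemma rE : (p.-1 %/ 2)%N = r.
Proof. rewrite pm. have -> : (4 * m + 3).-1 = (2 * m + 1) * 2 by lia. by rewrite mulnK. Qed.

Lemma natF_eq0 n : ((n%:R : F) == 0) = (p %| n)%N.
Proof. by rewrite (dvdn_pcharf (pchar_Fp pP)). Qed.

Lemma natF_neq0 n : (0 < n < p)%N -> (n%:R : F) != 0.
Proof. move=> /andP[h1 h2]; rewrite natF_eq0; apply/negP => /dvdn_leq; lia. Qed.

Lemma pF0 : (p%:R : F) = 0.
Proof. exact: pchar_Fp_0. Qed.

Lemma twor1 : (2 * r%:R + 1 : F) = 0.
Proof. rewrite -pF0 pm !natrD ?natrM. ring. Qed.

Lemma NF : (N%:R : F) = -1.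
Proof. rewrite natrM. apply/eqP; rewrite -subr_eq0 opprK twor1 //. Qed.

Lemma fermat (b : F) : b != 0 -> b ^+ N = 1.
Proof.
move=> bn0; have := expf_card b; rewrite card_Fp //.
have e : N.+1 = p by lia.
move=> h; have : b ^+ N.+1 = b by rewrite e.
rewrite exprS => h2; apply: (mulfI bn0); by rewrite mulr1.
Qed.

Lemma two_neq0 : (2 : F) != 0.
Proof. exact: (natF_neq0 2 (ltac:(lia) : (0 < 2 < p)%N)). Qed.

Lemma exp_odd (b : F) : (- b) ^+ r = - b ^+ r.
Proof. by rewrite exprNn -signr_odd oddD oddM /= expr1 mulN1r. Qed.


Lemma s_mod n : seq_s p n = seq_s p (n %% N).
Proof. by rewrite /seq_s rE modn_mod. Qed.

Lemma s_lo k : (k < r)%N -> seq_s p k = if odd k then - k%:R else k.+1%:R.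
Proof.
move=> hk; rewrite /seq_s rE /= (modn_small (_ : k < N)%N); last lia.
case: ifP => h1.
  by case: (odd k).
case: ifP => h2.
  move/eqP: h2 => ->; have e : (2 * m + 1).-1 = (2 * m)%N by lia.
  by rewrite e oddM /=; congr (_%:R); lia.
lia.
Qed.

Lemma s_hi k : (k < r)%N -> seq_s p (r + k) = if odd k then - k.+1%:R else k.+2%:R.
Proof.
move=> hk; rewrite /seq_s rE /= (modn_small (_ : r + k < N)%N); last lia.
case: ifP => h1; first lia.
case: ifP => h2; first lia.
have -> : (r + k - r = k)%N by lia.
case: ifP => h3; first by case: (odd k).
have -> : k = (2 * m)%N by lia.
by rewrite oddM /=; congr (_%:R); lia.
Qed.


Lemma s_hi2 k : (k < r)%N -> seq_s p (r + k) = seq_s p k + (-1) ^+ k.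
Proof.
move=> hk; rewrite s_hi // s_lo // -signr_odd.
case: (odd k); rewrite ?expr1 ?expr0 -?natr1; ring.
Qed.

Definition D (y : F) := \sum_(k < N) seq_s p k * y ^+ k.
Definition A (y : F) := \sum_(k < r) seq_s p k * y ^+ k.
Definition Q (y : F) := \sum_(k < r) (- y) ^+ k.
Definition Y (y : F) := \sum_(k < r) y ^+ k.
Definition W (y : F) := \sum_(k < r) (k.+1)%:R * (- y) ^+ k.

Lemma D_split y : D y = (1 + y ^+ r) * A y + y ^+ r * Q y.
Proof.
rewrite /D /A /Q.
have -> : N = (r + r)%N by lia.
rewrite big_split_ord /=.
rewrite mulrDl mul1r -addrA; congr (_ + _).
rewrite !big_distrr -big_split /=; apply: eq_bigr => k _.
rewrite s_hi2 // exprD (exprNn y); ring.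
Qed.

Lemma two_A y : 2 * A y = 2 * W y + Y y - Q y.
Proof.
rewrite /A /W /Y /Q !big_distrr -big_split -sumrB /=; apply: eq_bigr => k _.
rewrite s_lo // exprNn -signr_odd.
case: (odd k); rewrite ?expr1 ?expr0 -?natr1; ring.
Qed.

Lemma Q_mul (y : F) : (1 + y) * Q y = 1 + y ^+ r.
Proof. have := @geomY _ (- y) r; rewrite opprK exp_odd opprK => <-; by []. Qed.

Lemma Y_mul (y : F) : (1 - y) * Y y = 1 - y ^+ r.
Proof. exact: geomY. Qed.

Lemma W_mul (y : F) : (1 + y) ^+ 2 * W y = 1 - (r.+1)%:R * (- y) ^+ r + r%:R * (- y) ^+ r.+1.
Proof. exact: geomW. Qed.

Lemma sum_one n : \sum_(k < n) (1 : F) = n%:R.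
Proof. by rewrite sumr_const card_ord. Qed.

Lemma D_neg1 : D (-1) = - r%:R.
Proof.
rewrite D_split exp_odd expr1n /Q (eq_bigr (fun _ => 1)) ?sum_one; last first.
  by move=> k _; rewrite opprK expr1n.
ring.
Qed.

Lemma D_nonres (y : F) : y ^+ r = -1 -> y != -1 -> D y = 0.
Proof.
move=> hr hy; have hQ : Q y = 0.
  have := Q_mul y; rewrite hr subrr => /eqP; rewrite mulf_eq0 => /orP[|/eqP //].
  by rewrite addrC addr_eq0 (negPf hy).
by rewrite D_split hr hQ; ring.
Qed.

Lemma rF : (r%:R : F) = - 2^-1.
Proof.
apply: (mulfI two_neq0); rewrite mulrN mulfV ?two_neq0 //.
by apply/eqP; rewrite -subr_eq0 opprK twor1.
Qed.

Lemma D_res (y : F) : y ^+ r = 1 -> y != 1 -> (1 + y) ^+ 2 * D y = 3 - y.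
Proof.
move=> hr hy; have hY : Y y = 0.
  have := Y_mul y; rewrite hr subrr => /eqP; rewrite mulf_eq0 => /orP[|/eqP //].
  by rewrite subr_eq0 eq_sym (negPf hy).
have hD : D y = 2 * W y + Y y.
  rewrite D_split hr; have -> : (1 + 1 : F) * A y = 2 * A y by ring.
  rewrite two_A; ring.
have hW := W_mul y; rewrite [(- y) ^+ r.+1]exprS !exp_odd hr -[r.+1%:R]natr1 rF in hW.
rewrite hD hY addr0 mulrCA hW.
field. exact: two_neq0.
Qed.

Lemma D_1 : D 1 = 0.
Proof.
have hY : Y 1 = r%:R by rewrite /Y (eq_bigr (fun _ => 1)) ?sum_one // => k _; rewrite expr1n.
have hD : D 1 = 2 * W 1 + Y 1.
  rewrite D_split expr1n; have -> : (1 + 1 : F) * A 1 = 2 * A 1 by ring.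
  rewrite two_A; ring.
have hW := W_mul 1; rewrite [(- 1) ^+ r.+1]exprS !exp_odd !expr1n -[r.+1%:R]natr1 rF in hW.
have h4 : W 1 = (1 - (- 2^-1 + 1) * -1 + - 2^-1 * (- 1 * - 1)) / 4.
  rewrite -hW; field.
  by rewrite -[4]/(4%:R) natF_neq0 //; lia.
rewrite hD hY h4 rF.
field.
  by rewrite two_neq0 -[4]/(4%:R) natF_neq0 //; lia.
Qed.

Definition c (b : F) := \sum_(k < N) seq_s p k * b ^+ (N - k).

Lemma c_D b : b != 0 -> c b = D (b^-1).
Proof.
move=> bn0; rewrite /c /D; apply: eq_bigr => k _; congr (_ * _).
by rewrite expfB // fermat // div1r exprVn.
Qed.

Lemma card_nz : #|[pred a : F | a != 0]| = N.
Proof.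
have -> : #|[pred a : F | a != 0]| = #|predC1 (0 : F)| by apply: eq_card.
by rewrite cardC1 card_Fp // pm; lia.
Qed.

Lemma sum_nz_one : \sum_(a : F | a != 0) (1 : F) = -1.
Proof.
rewrite -NF -card_nz -sumr_const; by apply: eq_bigl.
Qed.

Lemma exp_modN (b : F) j : b != 0 -> b ^+ j = b ^+ (j %% N).
Proof.
move=> bn0; rewrite {1}(divn_eq j N) exprD mulnC exprM fermat // expr1n mul1r //.
Qed.

Lemma exists_not1 j : ~~ (N %| j)%N -> exists2 b : F, b != 0 & b ^+ j != 1.
Proof.
move=> hj.
case: (pickP (fun b : F => (b != 0) && (b ^+ j != 1))) => [b /andP[? ?] | hn]; first by exists b.
exfalso.
have hj' : (0 < j %% N < N)%N.
  by rewrite ltn_pmod ?andbT ?lt0n //; lia.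
have := @max_unity_roots F (j %% N)%N (enum [pred a : F | a != 0]).
rewrite -cardE card_nz enum_uniq.
have -> : all (j %% N).-unity_root (enum [pred a : F | a != 0]).
  apply/allP => b; rewrite mem_enum inE => bn0; rewrite unity_rootE -exp_modN //.
  by move: (hn b); rewrite bn0 /= => /negbFE.
move=> /(_ _ isT isT); lia.
Qed.

Lemma psum j : \sum_(a : F | a != 0) a ^+ j = if (N %| j)%N then -1 else 0.
Proof.
case: ifP => hj.
  rewrite -sum_nz_one; apply: eq_bigr => a an0.
  by move/dvdnP: hj => [q ->]; rewrite mulnC exprM fermat // expr1n.
have [b bn0 hb] := @exists_not1 j (negbT hj).
set S := (X in X = _).
have hS : S = b ^+ j * S.
  rewrite {2}/S big_distrr /S (reindex_inj (mulfI bn0)) /=.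
  apply: eq_big => [a|a _]; first by rewrite mulf_eq0 negb_or bn0.
  by rewrite exprMn.
apply/eqP; move/eqP: hS; rewrite -subr_eq0 -{1}[S]mul1r -mulrBl mulf_eq0.
by rewrite subr_eq0 eq_sym (negPf hb).
Qed.

Lemma dvdN_iff (k : 'I_N) n : (N %| N - k + n)%N = (nat_of_ord k == n %% N)%N.
Proof.
have kN := ltn_ord k.
have tN : (n %% N < N)%N by rewrite ltn_pmod //; lia.
rewrite /dvdn -modnDmr.
case: (ltnP (n %% N) k) => h.
  rewrite modn_small; last lia.
  by case: eqP => H1; case: eqP => H2 //; lia.
have -> : (N - k + n %% N = (n %% N - k) + N)%N by lia.
rewrite modnDr modn_small; last lia.
by case: eqP => H1; case: eqP => H2 //; lia.
Qed.

Lemma inversion n : \sum_(a : F | a != 0) c a * a ^+ n = - seq_s p n.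
Proof.
rewrite /c.
have -> : \sum_(a : F | a != 0) (\sum_(k < N) seq_s p k * a ^+ (N - k)) * a ^+ n
        = \sum_(k < N) seq_s p k * \sum_(a : F | a != 0) a ^+ (N - k + n).
  under eq_bigr do rewrite big_distrl.
  rewrite exchange_big /=; apply: eq_bigr => k _.
  rewrite big_distrr /=; apply: eq_bigr => a _; rewrite exprD; ring.
have hN : (0 < N)%N by lia.
rewrite (bigD1 (Ordinal (ltn_pmod n hN))) //= [X in _ + X = _]big1 ?addr0; last first.
  move=> k hk; rewrite psum dvdN_iff.
  case: eqP; last by rewrite mulr0.
  by move=> e; move: hk; rewrite -val_eqE /= e eqxx.
rewrite psum; have := dvdN_iff (Ordinal (ltn_pmod n hN)) n; rewrite /= eqxx => ->.
by rewrite mulrN1 -s_mod.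
Qed.

Lemma ann_expand (g : {poly F}) n :
  \sum_(i < size g) g`_i * seq_s p (n + i)
  = - \sum_(a : F | a != 0) c a * g.[a] * a ^+ n.
Proof.
transitivity (- \sum_(i < size g) \sum_(a : F | a != 0) g`_i * (c a * a ^+ (n + i))).
  rewrite -sumrN; apply: eq_bigr => i _.
  by rewrite -[seq_s p _]opprK -inversion mulrN big_distrr.
rewrite exchange_big /=; congr (- _); apply: eq_bigr => a _.
rewrite horner_coef big_distrr big_distrl /=; apply: eq_bigr => i _.
rewrite exprD; ring.
Qed.

Lemma ann_iff (g : {poly F}) :
  annihilates g (seq_s p) <-> (forall b : F, b != 0 -> c b * g.[b] = 0).
Proof.
split; last first.
  move=> h n; rewrite ann_expand big1 ?oppr0 // => a an0; by rewrite h // mul0r.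
move=> h b bn0.
have w0 n : \sum_(a : F | a != 0) c a * g.[a] * a ^+ n = 0.
  by apply/eqP; rewrite -oppr_eq0 -ann_expand h.
have : \sum_(i < N) (\sum_(a : F | a != 0) c a * g.[a] * a ^+ (N.-1 - i)) * b ^+ i = 0.
  by rewrite big1 // => i _; rewrite w0 mul0r.
under eq_bigr do rewrite big_distrl.
rewrite exchange_big /= (bigD1 b) //= [X in _ + X]big1 ?addr0; last first.
  move=> a /andP[an0 ab].
  under eq_bigr do rewrite -mulrA.
  rewrite -big_distrr /=.
  have : a ^+ N - b ^+ N = 0 by rewrite !fermat // subrr.
  rewrite subrXX => /eqP; rewrite mulf_eq0 subr_eq0 (negPf ab) /= => /eqP ->.
  by rewrite mulr0.
under eq_bigr do rewrite -mulrA -exprD.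
have e : forall i : 'I_N, (N.-1 - i + i = N.-1)%N by move=> i; have := ltn_ord i; lia.
under eq_bigr do rewrite e.
rewrite -big_distrr /= sumr_const card_ord => /eqP.
rewrite -mulr_natr NF mulrN1 mulrN oppr_eq0 mulf_eq0 expf_eq0 (negPf bn0) andbF orbF.
by move/eqP.
Qed.

Lemma m1_neq1 : (-1 : F) != 1.
Proof.
apply/negP => /eqP h; move: two_neq0; have -> : (2 : F) = 1 + 1 by ring. by rewrite -{1}h addNr eqxx.
Qed.

Lemma pow_r_pm1 (b : F) : b != 0 -> (b ^+ r == 1) || (b ^+ r == -1).
Proof. by move=> bn0; rewrite -sqrf_eq1 -exprM mulnC fermat. Qed.

Lemma c_ne0 (b : F) : b != 0 ->
  (c b != 0) = ((b == -1) || ((b ^+ r == 1) && (b != 1) && (b != 3^-1))).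
Proof.
move=> bn0; rewrite c_D //.
have [-> | bm1] := eqVneq b (-1).
  by rewrite invrN1 D_neg1 oppr_eq0 natF_neq0 //; lia.
rewrite /=.
have ym1 : b^-1 != -1 by rewrite -invrN1 (inj_eq (@invr_inj _)).
case/orP: (pow_r_pm1 _ bn0) => /eqP hr.
  rewrite hr eqxx /=.
  have [-> | b1] := eqVneq b 1; first by rewrite invr1 D_1 eqxx.
  have hy : (b^-1) ^+ r = 1 by rewrite exprVn hr invr1.
  have y1 : b^-1 != 1 by rewrite invr_eq1.
  have := @D_res (b^-1) hy y1 => e.
  have h1y : (1 + b^-1) ^+ 2 != 0.
    by rewrite expf_eq0 /= addrC addr_eq0.
  apply/idP/idP.
    move=> hD; apply/negP => /eqP hb.
    have hb3 : b^-1 = 3 by rewrite hb invrK.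
    move: e; rewrite [in RHS]hb3 subrr => /eqP; rewrite mulf_eq0 (negPf h1y) /= => /eqP e.
    by move: hD; rewrite e eqxx.
  move=> hb; apply/negP => /eqP hD; move: e; rewrite hD mulr0 => /esym/eqP.
  rewrite subr_eq0 => /eqP h3; move: hb; by rewrite h3 invrK eqxx.
have hy : (b^-1) ^+ r = -1 by rewrite exprVn hr invrN1.
rewrite D_nonres // eqxx hr (negPf m1_neq1) //.
Qed.

Definition Rset := [set b : F | b ^+ r == 1].

Lemma card_R_le : (#|Rset| <= r)%N.
Proof.
have := @max_unity_roots F r (enum Rset); rewrite -cardE enum_uniq.
apply; first lia.
by apply/allP => b; rewrite mem_enum inE unity_rootE. by [].
Qed.

Definition sq (i : 'I_r) : F := (i.+1)%:R ^+ 2.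

Lemma sq_inj : injective sq.
Proof.
move=> i j; have hi := ltn_ord i; have hj := ltn_ord j; move=> /eqP; rewrite /sq -subr_eq0 subrXX !big_ord_recr big_ord0 /= !expr0 !expr1.
rewrite add0r mulr1 mul1r mulf_eq0 => /orP[|].
  rewrite subr_eq0 => /eqP /(congr1 (@nat_of_ord _)); rewrite !val_Fp_nat // !modn_small; try lia.
  by move=> [e]; apply: val_inj.
rewrite -natrD natF_eq0 => /dvdn_leq; lia.
Qed.

Lemma sq_in_R (x : F) : x != 0 -> x ^+ 2 \in Rset.
Proof. by move=> xn0; rewrite inE -exprM fermat. Qed.

Lemma R_sq : Rset = [set sq i | i in [set: 'I_r]].
Proof.
apply/eqP; rewrite eq_sym eqEcard card_imset ?cardsT ?card_ord; last exact: sq_inj.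
rewrite card_R_le andbT; apply/subsetP => x /imsetP[i _ ->].
by apply: sq_in_R; rewrite natF_neq0 //; have := ltn_ord i; lia.
Qed.

Lemma card_R : #|Rset| = r.
Proof. by rewrite R_sq card_imset ?cardsT ?card_ord //; exact: sq_inj. Qed.

Lemma three_neq0 : (3 : F) != 0.
Proof. by rewrite natF_neq0 //; lia. Qed.

Lemma three_r_7 : (p %% 12 = 7)%N -> (3 : F) ^+ r = -1.
Proof.
move=> h12; have := divn_eq p 12; rewrite h12 => hq.
set q := (p %/ 12)%N in hq.
have hN : N = (3 * (2 * (2 * q + 1)))%N by lia.
have hnd : ~~ (N %| 2 * (2 * q + 1))%N by apply/negP => /dvdn_leq; lia.
have [b bn0 hb] := @exists_not1 _ hnd.
set w := b ^+ (2 * (2 * q + 1)) in hb.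
have w3 : w ^+ 3 = 1 by rewrite /w -exprM mulnC -hN fermat.
have w2 : w ^+ 2 + w + 1 = 0.
  have : (w - 1) * (w ^+ 2 + w + 1) = 0 by rewrite -[RHS](subrr 1) -[X in _ = X - _]w3; ring.
  by move/eqP; rewrite mulf_eq0 subr_eq0 (negPf hb) /= => /eqP.
have e : (2 * w + 1) ^+ 2 = - 3.
  have -> : (2 * w + 1) ^+ 2 = 4 * (w ^+ 2 + w + 1) - 3 by ring.
  by rewrite w2 mulr0 add0r.
have nz : 2 * w + 1 != 0.
  by apply/negP => /eqP h0; move: e; rewrite h0 expr0n /= => /eqP; rewrite eq_sym oppr_eq0 (negPf three_neq0).
have := fermat _ nz; rewrite exprM e exp_odd => /eqP.
by rewrite eqr_oppLR => /eqP.
Qed.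

Lemma three_r_11 : (p %% 12 = 11)%N -> (3 : F) ^+ r = 1.
Proof.
move=> h12; have := divn_eq p 12; rewrite h12 => hq.
set q := (p %/ 12)%N in hq.
have hN : N = (3 * (4 * q + 3) + 1)%N by lia.
case/orP: (pow_r_pm1 _ three_neq0) => /eqP h3 //.
exfalso.
have : (- 3 : F) \in Rset by rewrite inE exp_odd h3 opprK.
rewrite R_sq => /imsetP[i _]; set c := sq i => hc.
have c2 : c = ((i.+1)%:R) ^+ 2 by [].
set w := ((i.+1)%:R - 1) / (2 : F).
have w2 : w ^+ 2 + w + 1 = 0.
  have -> : w ^+ 2 + w + 1 = ((i.+1)%:R ^+ 2 + 3) / 4.
    rewrite /w; field; by rewrite two_neq0 -[4]/(4%:R) natF_neq0 //; lia.
  by rewrite -c2 -hc addNr mul0r.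
have w3 : w ^+ 3 = 1.
  apply/eqP; rewrite -subr_eq0.
  have -> : w ^+ 3 - 1 = (w - 1) * (w ^+ 2 + w + 1) by ring.
  by rewrite w2 mulr0.
have wn0 : w != 0.
  by apply/negP => /eqP h0; move: w2; rewrite h0 expr0n /= !add0r => /eqP; rewrite oner_eq0.
have := fermat _ wn0; rewrite hN exprD exprM w3 expr1n mul1r expr1 => hw.
move: w2; rewrite hw expr1n => /eqP.
have -> : (1 + 1 + 1 : F) = 3 by ring.
by rewrite (negPf three_neq0).
Qed.

Definition Bset := [set b : F | (b != 0) && (c b != 0)].
Definition Pb : {poly F} := \prod_(b in Bset) ('X - b%:P).

Lemma Pb_dvd (g : {poly F}) : (forall b, b \in Bset -> root g b) -> Pb %| g.
Proof.
move=> h.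
have hall : all (root g) (enum Bset) by apply/allP => b; rewrite mem_enum; apply: h.
have hu : uniq_roots (enum Bset) by rewrite uniq_rootsE enum_uniq.
have [q ->] := uniq_roots_prod_XsubC hall hu.
by rewrite big_enum dvdp_mull.
Qed.

Lemma size_Pb : size Pb = (#|Bset|).+1.
Proof. by rewrite /Pb -big_enum size_prod_XsubC -cardE. Qed.

Lemma min_poly_crit (f : {poly F}) :
  f \is monic -> (forall b, b \in Bset -> root f b) -> size f = (#|Bset|).+1 ->
  is_min_poly f (seq_s p).
Proof.
move=> fm froot fsz.
have Pf : Pb %| f by apply: Pb_dvd.
have eqPf : Pb %= f by rewrite -dvdp_size_eqp // size_Pb fsz.
split=> //; split.
  apply/ann_iff => b bn0; have [->|cb] := eqVneq (c b) 0; first by rewrite mul0r.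
  have : root f b by apply: froot; rewrite inE bn0 cb.
  by move/rootP => ->; rewrite mulr0.
move=> g /ann_iff hg; rewrite -(eqp_dvdl _ eqPf); apply: Pb_dvd => b.
rewrite inE => /andP[bn0 cb]; apply/rootP; have := hg b bn0.
by move/eqP; rewrite mulf_eq0 (negPf cb) /= => /eqP.
Qed.

Lemma inB (b : F) : (b \in Bset) =
  (b != 0) && ((b == -1) || ((b ^+ r == 1) && (b != 1) && (b != 3^-1))).
Proof.
rewrite inE; have [->|bn0] := eqVneq b 0; first by [].
by rewrite /= c_ne0.
Qed.

Lemma m1_notR : (-1 : F) \notin Rset.
Proof. by rewrite inE exp_odd expr1n m1_neq1. Qed.

Lemma one_R : (1 : F) \in Rset.
Proof. by rewrite inE expr1n. Qed.

Lemma inv3_r : ((3 : F)^-1) ^+ r = ((3 : F) ^+ r)^-1.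
Proof. by rewrite exprVn. Qed.

Lemma num_root (b : F) : b \in Bset -> root (('X + 1) * ('X^r - 1)) b.
Proof.
rewrite inB => /andP[_ /orP[/eqP -> | /andP[/andP[/eqP hr _] _]]];
  by rewrite rootM /root !hornerE ?hr ?subrr ?addNr ?eqxx ?orbT.
Qed.

Lemma num_monic : ('X + 1) * ('X^r - 1) \is @monic F.
Proof. by rewrite -polyC1 monicMl ?monicXaddC // monicXnsubC //; lia. Qed.

Lemma num_size : size (('X + 1) * ('X^r - 1) : {poly F}) = r.+2.
Proof.
rewrite -polyC1 size_Mmonic ?monicXnsubC ?size_XaddC ?size_XnsubC //; try lia.
by rewrite -size_poly_eq0 size_XaddC.
Qed.

Lemma case7 : (p %% 12 = 7)%N ->
  is_min_poly ((('X + 1) * ('X^r - 1)) %/ ('X - 1)) (seq_s p).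
Proof.
move=> h7; have h3 := three_r_7 h7.
set num := ('X + 1) * ('X^r - 1).
have e1 : ('X - 1 : {poly F}) = 'X - 1%:P by rewrite polyC1.
have hd : ('X - 1) %| num.
  by rewrite e1 dvdp_XsubCl /num rootM /root !hornerE expr1n subrr eqxx orbT.
set f := num %/ ('X - 1).
have hf : f * ('X - 1) = num := divpK hd.
have fm : f \is monic by rewrite -(monicMr f (monicXsubC 1)) -e1 hf num_monic.
apply: min_poly_crit => //.
  move=> b hb; have := num_root _ hb; rewrite -/num -hf rootM e1 root_XsubC.
  move: hb; rewrite inB => /andP[_ /orP[/eqP -> | /andP[/andP[_ b1] _]]].
    by rewrite (negPf m1_neq1) orbF.
  by rewrite (negPf b1) orbF.
have hsz : size num = (size f).+1.
  by rewrite -hf e1 size_Mmonic ?monicXsubC ?monic_neq0 // size_XsubC addn2.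
have hB : Bset = (-1) |: (Rset :\ 1).
  apply/setP => b; rewrite inB !inE.
  have [->|bm1] := eqVneq b (-1); first by rewrite oppr_eq0 oner_eq0.
  have [->|bn0] := eqVneq b 0; first by rewrite expr0n addn1 /= eq_sym oner_eq0.
  rewrite /=; case: (b ^+ r =P 1) => hr; last by rewrite andbF.
  rewrite andbT /=; have [hb3|] := eqVneq b 3^-1; last by rewrite andbT.
  by move: hr; rewrite hb3 inv3_r h3 invrN1 => /eqP; rewrite (negPf m1_neq1).
have cB : #|Bset| = r.
  rewrite hB cardsU1 in_setD1 (negPf m1_notR) andbF /=.
  have := cardsD1 1 Rset; rewrite one_R card_R /=; by move=> ->.
move: hsz; rewrite num_size cB; by case.
Qed.

Lemma case11 : (p %% 12 = 11)%N ->
  is_min_poly ((('X + 1) * ('X^r - 1)) %/ (('X - 1) * ('X - (3%:R : F)^-1%:P))) (seq_s p).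
Proof.
move=> h11; have h3 := three_r_11 h11.
set i3 := (3%:R : F)^-1.
have i3r : i3 ^+ r = 1 by rewrite /i3 exprVn h3 invr1.
have i31 : i3 != 1.
  rewrite /i3 invr_eq1; apply/negP => /eqP h; move: two_neq0.
  have -> : (2 : F) = 3 - 1 by ring.
  by rewrite h subrr eqxx.
have i3m1 : i3 != -1.
  rewrite /i3 -invrN1 (inj_eq (@invr_inj _)); apply/negP => /eqP h.
  have : (4%:R : F) != 0 by rewrite natF_neq0 //; lia.
  have -> : (4%:R : F) = 3 + 1 by ring.
  by rewrite h addNr eqxx.
set num := ('X + 1) * ('X^r - 1).
have e1 : ('X - 1 : {poly F}) = 'X - 1%:P by rewrite polyC1.
set den := ('X - 1) * ('X - i3%:P).
have hd : den %| num.
  have hall : all (root num) [:: 1; i3].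
    by rewrite /= /num !rootM /root !hornerE expr1n i3r subrr eqxx !orbT.
  have hu : uniq_roots [:: 1; i3].
    by rewrite uniq_rootsE /= inE eq_sym i31.
  have [q ->] := uniq_roots_prod_XsubC hall hu.
  by rewrite !big_cons big_nil mulr1 /den e1 dvdp_mull.
set f := num %/ den.
have hf : f * den = num := divpK hd.
have denm : den \is monic by rewrite /den e1 monicMl ?monicXsubC.
have fm : f \is monic by rewrite -(monicMr f denm) hf num_monic.
apply: min_poly_crit => //.
  move=> b hb; have := num_root _ hb; rewrite -/num -hf rootM /den e1 rootM !root_XsubC.
  move: hb; rewrite inB => /andP[_ /orP[/eqP -> | /andP[/andP[_ b1] b3]]].
    by rewrite (negPf m1_neq1) eq_sym (negPf i3m1) !orbF.
  by rewrite (negPf b1) (negPf b3) !orbF.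
have hsz : size num = (size f).+2.
  rewrite -hf size_Mmonic ?monic_neq0 // /den e1 size_Mmonic ?monicXsubC ?monic_neq0 // ?monicXsubC //.
  by rewrite !size_XsubC /= !addnS addn0.
have hB : Bset = (-1) |: ((Rset :\ 1) :\ i3).
  apply/setP => b; rewrite inB !inE.
  have [->|bm1] := eqVneq b (-1); first by rewrite oppr_eq0 oner_eq0.
  have [->|bn0] := eqVneq b 0; first by rewrite expr0n addn1 /= (eq_sym (0 : F) 1) oner_eq0 andbF.
  by rewrite /=; case: (b ^+ r == 1); rewrite ?andbF // andbT andbC.
have cB : #|Bset| = r.-1.
  rewrite hB cardsU1 !in_setD1 (negPf m1_notR) !andbF /=.
  have := cardsD1 1 Rset; rewrite one_R card_R /=.
  have := cardsD1 i3 (Rset :\ 1); rewrite in_setD1 i31 inE i3r eqxx /=.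
  move=> -> ->; by [].
move: hsz; rewrite num_size cB => -[<-]; by rewrite addn1.
Qed.

Lemma rev_root (a : F) : N.-primitive_root a -> root (rev_gen N (seq_s p)) a.
Proof.
move=> pa.
have an0 : a != 0.
  apply/negP => /eqP a0; have := prim_expr_order pa; rewrite a0 expr0n.
  have -> : (N == 0)%N = false by apply/negP => /eqP; lia.
  by move/eqP; rewrite eq_sym oner_eq0.
have ar : a ^+ r != 1 by rewrite -(prim_order_dvd pa); apply/negP => /dvdn_leq; lia.
have am1 : a != -1.
  apply/negP => /eqP am; move: (prim_order_dvd pa 2); rewrite am sqrrN expr1n eqxx.
  by move/dvdn_leq; lia.
have hc : c a = 0 by apply/eqP; apply/negPn; rewrite c_ne0 // (negPf am1) (negPf ar).
have : a * (rev_gen N (seq_s p)).[a] = c a.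
  rewrite /rev_gen horner_poly /c big_distrr [RHS](reindex_inj rev_ord_inj) /=.
  apply: eq_bigr => i _; have hi := ltn_ord i.
  have -> : (N - i.+1 = N.-1 - i)%N by lia.
  have -> : (N - (N.-1 - i) = i.+1)%N by lia.
  by rewrite exprS; ring.
rewrite hc => /eqP; rewrite mulf_eq0 (negPf an0) /= => /eqP.
by move/rootP.
Qed.

Lemma exists_prim : exists z : F, N.-primitive_root z.
Proof.
have := @has_prim_root F N (enum [pred a : F | a != 0]).
rewrite -cardE card_nz enum_uniq leqnn.
have -> : all N.-unity_root (enum [pred a : F | a != 0]).
  by apply/allP => b; rewrite mem_enum inE => bn0; rewrite unity_rootE fermat.
move=> /(_ ltac:(lia) isT isT isT) /hasP[z _ hz]; by exists z.
Qed.

Lemma phi_dvd : phi_mod p N %| rev_gen N (seq_s p).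
Proof.
have [z pz] := exists_prim.
have -> : phi_mod p N = map_poly intr 'Phi_N by [].
rewrite (@map_Phi _ _ _ pz).
have -> : cyclotomic z N =
  \prod_(x <- [seq z ^+ i | i : 'I_N in [pred i : 'I_N | coprime i N]]) ('X - x%:P).
  by rewrite big_image.
have hall : all (root (rev_gen N (seq_s p))) [seq z ^+ i | i : 'I_N in [pred i : 'I_N | coprime i N]].
  apply/allP => x /imageP[i hi ->]; apply: rev_root.
  by rewrite prim_root_exp_coprime.
have hu : uniq_roots [seq z ^+ i | i : 'I_N in [pred i : 'I_N | coprime i N]].
  rewrite uniq_rootsE map_inj_uniq ?enum_uniq // => i j /eqP.
  rewrite (eq_prim_root_expr pz) !modn_small // => /eqP; exact: val_inj.
have [q ->] := uniq_roots_prod_XsubC hall hu.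
exact: dvdp_mull.
Qed.

Lemma s_nz (i : 'I_N) : seq_s p i != 0.
Proof.
have hi := ltn_ord i.
case: (ltnP i r) => h.
  rewrite s_lo //; case: ifP => ho.
    rewrite oppr_eq0 natF_neq0 //; apply/andP; split; last lia.
    by case: (nat_of_ord i) ho.
  by rewrite natF_neq0 //; lia.
have -> : nat_of_ord i = (r + (i - r))%N by lia.
rewrite s_hi; last lia.
case: ifP => _; rewrite ?oppr_eq0 natF_neq0 //; lia.
Qed.

Lemma val_natr (x : F) : ((nat_of_ord x)%:R : F) = x.
Proof. exact: natr_Zp. Qed.

Lemma set_eq : [set seq_s p (val i) | i : 'I_N] = [set x : F | x != 0].
Proof.
apply/setP => x; rewrite inE; apply/imsetP/idP.
  by move=> [i _ ->]; apply: s_nz.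
move=> xn0.
set v := nat_of_ord x.
have vp : (v < p)%N by have := ltn_ord x; have := Fp_cast pP; rewrite -/v; lia.
have v0 : (0 < v)%N.
  rewrite lt0n; apply/negP => /eqP v0; move: xn0; by rewrite -(val_natr x) -/v v0 mulr0n eqxx.
have hx : x = v%:R by rewrite val_natr.
case: (leqP v r.+1) => hv.
  have := odd_double_half v; set t := v./2.
  case hov : (odd v) => /= ht.
    have hk : (t.*2 < N)%N by lia.
    exists (Ordinal hk) => //=; rewrite s_lo; last lia.
    by rewrite odd_double hx -ht.
  have hk : (r + (t.*2 - 2) < N)%N by lia.
  exists (Ordinal hk) => //=; rewrite s_hi; last lia.
  have -> : (t.*2 - 2 = (t - 1).*2)%N by lia.
  by rewrite odd_double hx; congr (_%:R); lia.
set w := (p - v)%N.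
have hxw : x = - w%:R.
  apply/eqP; rewrite eq_sym eqr_oppLR -addr_eq0 hx -natrD.
  have -> : (w + v)%N = p by lia.
  by rewrite pF0.
have := odd_double_half w; set t := w./2.
case how : (odd w) => /= ht.
  have hk : (t.*2.+1 < N)%N by lia.
  exists (Ordinal hk) => //=; rewrite s_lo; last lia.
  by rewrite /= odd_double /= hxw -ht addnC addn1.
have hk : (r + (t.*2 - 1) < N)%N by lia.
exists (Ordinal hk) => //=; rewrite s_hi; last lia.
have -> : (t.*2 - 1 = (t - 1).*2.+1)%N by lia.
rewrite /= odd_double /= hxw; congr (- _%:R); lia.
Qed.

Lemma p12 : (p %% 12 = 7)%N \/ (p %% 12 = 11)%N.
Proof.
have h3 : ~~ (3 %| p)%N.
  apply/negP => /(prime_nt_dvdP pP) h; have /h/eqP : (3 != 1)%N by []; lia.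
move: h3; rewrite /dvdn; lia.
Qed.

Lemma main_sec :
  [set seq_s p (val i) | i : 'I_N] = [set x : F | x != 0]
  /\ phi_mod p N %| rev_gen N (seq_s p)
  /\ is_min_poly
       (if (p %% 12 == 7)%N then
          (('X + 1) * ('X^r - 1)) %/ ('X - 1)
        else
          (('X + 1) * ('X^r - 1)) %/ (('X - 1) * ('X - (3%:R : 'F_p)^-1%:P)))
       (seq_s p).
Proof.
split; first exact: set_eq.
split; first exact: phi_dvd.
case: ifP => /eqP h; first exact: case7.
by apply: case11; case: p12.
Qed.
End S.

Theorem mainTheorem11 (p : nat) :
  prime p -> (7 <= p)%N -> p = 3 %[mod 4] ->
  let r := (p.-1 %/ 2)%N in
  [set seq_s p (val i) | i : 'I_(2 * r)] = [set x : 'F_p | x != 0]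
  /\ phi_mod p (2 * r) %| rev_gen (2 * r) (seq_s p)
  /\ is_min_poly
       (if (p %% 12 == 7)%N then
          (('X + 1) * ('X^r - 1)) %/ ('X - 1)
        else
          (('X + 1) * ('X^r - 1)) %/ (('X - 1) * ('X - (3%:R : 'F_p)^-1%:P)))
       (seq_s p).
Proof.
move=> pP p7 p3 r.
set m := (p %/ 4)%N.
have pm : p = (4 * m + 3)%N.
  by have := divn_eq p 4; move: p3; rewrite /m (modn_small (_ : 3 < 4)%N) //; lia.
have m1 : (1 <= m)%N by lia.
have -> : r = (2 * m + 1)%N.
  rewrite /r pm; have e : (4 * m + 3).-1 = ((2 * m + 1) * 2)%N by lia.
  by rewrite e mulnK.
exact: main_sec.
Qed.
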